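(* Let $G$ be a finite group and let $V$ be an abelian normal $2$-subgroup of $G$ such that $C_G(V)\leq V$. Let $\alpha$ be an automorphism of $G$ such that $[V,\alpha]=1$ and $\alpha^2\in\mathrm{Inn}(G)$. Then $[G,\alpha] \leq V$, and if $G$ acts fixed point freely on $V/\Phi(V)$, then the order of $\alpha$ is at most the exponent of $V$.
   Context: $\mathrm{Inn}(G)$ denotes the group of inner automorphisms of $G$. *)

(* Defs.v *)
From mathcomp Require Import all_boot all_fingroup all_solvable.
Set Implicit Arguments. Unset Strict Implicit. Unset Printing Implicit Defensive.
Local Open Scope group_scope.

Definition inner_aut_of (gT : finGroupType) (G : {set gT}) (a : {perm gT}) :=
  exists2 x, x \in G & forall g, g \in G -> a g = g ^ x.

(* Main.v *)
Require Import Defs.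
From mathcomp Require Import all_boot all_fingroup all_solvable.
Local Open Scope group_scope.

Theorem lemma3p4 (gT : finGroupType) (G V : {group gT}) (a : {perm gT}) :
  V <| G -> abelian V -> 2.-group V -> 'C_G(V) \subset V ->
  a \in Aut G ->
  (forall v, v \in V -> a v = v) ->
  inner_aut_of G (a ^+ 2) ->
  (forall g, g \in G -> g^-1 * a g \in V) /\
  ('C_(V / 'Phi(V))(G / 'Phi(V)) = 1 -> (#[a] <= exponent V)%N).
Proof.
move=> /andP[sVG nVG] abV _ sCV autA fixV _.
have morA := morphicP (Aut_morphic autA).
have part1 : forall g, g \in G -> g^-1 * a g \in V.
  move=> g Gg.
  have Gag := Aut_closed autA Gg.
  have Ch : a g * g^-1 \in 'C_G(V).
    rewrite inE groupM ?groupV //=; apply/centP => v Vv.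
    have Gv := subsetP sVG v Vv.
    have Hvg : v ^ g \in V by rewrite memJ_norm // (subsetP nVG).
    have E1 : a (v ^ g) = v ^ a g.
      by rewrite -(autmE autA) morphJ //= autmE fixV.
    have E2 : v ^ a g = v ^ g by rewrite -E1 fixV.
    apply: commute_sym; apply/commgP/conjg_fixP; by rewrite conjgM E2 -conjgM mulgV conjg1.
  have := subsetP sCV _ Ch; rewrite -(memJ_norm _ (subsetP nVG g Gg)).
  by rewrite /conjg !mulgA mulgKV.
split=> // _.
apply: dvdn_leq; first exact: exponent_gt0.
rewrite order_dvdn; apply/eqP/permP => y; rewrite perm1.
have formula : forall n, (a ^+ n) y = y * (y^-1 * a y) ^+ n.
  elim=> [|n IH]; first by rewrite expg0 perm1 mulg1.
  rewrite expgSr permM IH.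
  case Gy : (y \in G).
    have Vd := part1 y Gy.
    rewrite morA //; last by rewrite (subsetP sVG) ?groupX.
    by rewrite (fixV _ (groupX n Vd)) expgS mulgA mulKVg.
  by rewrite (out_Aut autA (negbT Gy)) mulVg !expg1n mulg1 (out_Aut autA (negbT Gy)).
have Gy : y \in G -> y^-1 * a y \in V := @part1 y.
case G0 : (y \in G).
  by rewrite formula (expg_exponent (part1 y G0)) mulg1.
by rewrite formula (out_Aut autA (negbT G0)) mulVg expg1n mulg1.
Qed.
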